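(* Let $p,k\ge 1$ be integers, let $a_1,\dots,a_k\in\mathbb{R}$, and let $\mathbf{f}:\mathbb{R}^p\to\mathbb{R}^p$ be a differentiable flux. Let $\mathbb{M}_1,\dots,\mathbb{M}_k:\mathbb{R}^p\to\mathbb{R}^p$ be differentiable maps satisfying, for all $\mathbf{u}$, $\sum_{i=1}^k \mathbb{M}_i(\mathbf{u})=\mathbf{u}$ and $\sum_{i=1}^k a_i\mathbb{M}_i(\mathbf{u})=\mathbf{f}(\mathbf{u})$, and set $\mathbf{m}_2(\mathbf{u})=\sum_{i=1}^k a_i^2\mathbb{M}_i(\mathbf{u})$. Fix $\mathbf{u}$ and suppose there exists a strictly convex entropy $\eta(\mathbf{u})$ with Hessian matrix $\mathbf{A}_0$ such that (1) $\mathbf{A}_0\mathbf{f}'(\mathbf{u})$ is symmetric, (2) $\mathbf{A}_0\mathbb{M}_i'(\mathbf{u})$ is symmetric positive definite for all $i$, and (3) $\min_i|a_i|>\rho(\mathbf{f}'(\mathbf{u}))$ (spectral radius). Then the matrix $\mathbf{m}_2'(\mathbf{u})-(\mathbf{f}'(\mathbf{u}))^2$ has real strictly positive eigenvalues and is invertible.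
   Context: Primes denote Jacobian matrices with respect to $\mathbf{u}$. In the kinetic model, $\mathbf{m}_2=\mathbb{P}\Lambda^2\mathbb{M}$ with $\Lambda=\mathrm{diag}(a_1\mathbf{I}_p,\dots,a_k\mathbf{I}_p)$ and $\mathbb{P}=(\mathbf{I}_p\ \cdots\ \mathbf{I}_p)$. *)

(* Defs.v *)
From HB Require Import structures.
From mathcomp Require Import all_boot all_order all_algebra.
From mathcomp Require Import all_classical all_reals all_analysis.
From mathcomp Require Import complex.
Set Implicit Arguments. Unset Strict Implicit. Unset Printing Implicit Defensive.
Import Order.TTheory GRing.Theory Num.Theory.
Import numFieldNormedType.Exports.
Local Open Scope classical_set_scope.
Local Open Scope ring_scope.

Definition ebasis {R : realType} {p : nat} (j : 'I_p) : 'rV[R]_p := delta_mx 0 j.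

(* Jacobian matrix in the usual convention: entry (i,j) = d f_i / d u_j.
   (MathComp-Analysis' 'J f u acts on row vectors, hence the transpose.) *)
Definition Jac {R : realType} {p : nat} (f : 'rV[R]_p -> 'rV[R]_p) (u : 'rV[R]_p)
  : 'M[R]_p := ('J f u)^T.

Definition hessian {R : realType} {p : nat} (eta : 'rV[R]_p -> R) (u : 'rV[R]_p)
  : 'M[R]_p := \matrix_(i, j) 'D_(ebasis i) ('D_(ebasis j) eta) u.

Definition strictly_convex {R : realType} {p : nat} (eta : 'rV[R]_p -> R) : Prop :=
  forall (x y : 'rV[R]_p) (t : R), x != y -> 0 < t < 1 ->
    eta (t *: x + (1 - t) *: y) < t * eta x + (1 - t) * eta y.

Definition cmx {R : realType} {p : nat} (A : 'M[R]_p) : 'M[R[i]]_p :=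
  map_mx (fun x => Complex x 0) A.

Definition cmodulus {R : realType} (z : R[i]) : R :=
  Num.sqrt (complex.Re z ^+ 2 + complex.Im z ^+ 2).

Definition spectral_radius {R : realType} {p : nat} (A : 'M[R]_p) : R :=
  sup [set r : R | exists lam : R[i], eigenvalue (cmx A) lam /\ r = cmodulus lam].

Definition symmetric_mx {R : realType} {p : nat} (A : 'M[R]_p) : Prop := A^T = A.

Definition posdef_mx {R : realType} {p : nat} (A : 'M[R]_p) : Prop :=
  symmetric_mx A /\ forall v : 'rV[R]_p, v != 0 -> 0 < (v *m A *m v^T) 0 0.

(* Main.v *)
Require Import Defs.
From HB Require Import structures.
From mathcomp Require Import all_boot all_order all_algebra.
From mathcomp Require Import all_classical all_reals all_analysis.
From mathcomp Require Import complex.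
From mathcomp Require Import ring.
Import Order.TTheory GRing.Theory Num.Theory.
Import numFieldNormedType.Exports.
Local Open Scope ring_scope.

Section Cplx.
Variable R : realType.

Lemma ReD (x y : R[i]) : complex.Re (x + y) = complex.Re x + complex.Re y.
Proof. by case: x; case: y. Qed.
Lemma ImD (x y : R[i]) : complex.Im (x + y) = complex.Im x + complex.Im y.
Proof. by case: x; case: y. Qed.
Lemma Re_sum n (F : 'I_n -> R[i]) : complex.Re (\sum_(l < n) F l) = \sum_(l < n) complex.Re (F l).
Proof. by apply: (big_morph _ ReD). Qed.
Lemma Im_sum n (F : 'I_n -> R[i]) : complex.Im (\sum_(l < n) F l) = \sum_(l < n) complex.Im (F l).
Proof. by apply: (big_morph _ ImD). Qed.
Lemma ReMr (z : R[i]) (c : R) : complex.Re (z * (Complex c 0)) = complex.Re z * c.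
Proof. by case: z => a b /=; rewrite mulr0 subr0. Qed.
Lemma ImMr (z : R[i]) (c : R) : complex.Im (z * (Complex c 0)) = complex.Im z * c.
Proof. by case: z => a b /=; rewrite mulr0 add0r. Qed.
Lemma ReMl (l z : R[i]) : complex.Re (l * z) = complex.Re l * complex.Re z - complex.Im l * complex.Im z.
Proof. by case: z; case: l. Qed.
Lemma ImMl (l z : R[i]) : complex.Im (l * z) = complex.Re l * complex.Im z + complex.Im l * complex.Re z.
Proof. by case: z; case: l => a b c d /=; rewrite addrC. Qed.

Lemma Re_mul n (w : 'rV[R[i]]_n) (C : 'M[R]_n) :
  map_mx (@complex.Re R) (w *m map_mx (real_complex R) C) = map_mx (@complex.Re R) w *m C.
Proof.
apply/matrixP => i j; rewrite !mxE Re_sum; apply: eq_bigr => l _.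
by rewrite !mxE ReMr.
Qed.
Lemma Im_mul n (w : 'rV[R[i]]_n) (C : 'M[R]_n) :
  map_mx (@complex.Im R) (w *m map_mx (real_complex R) C) = map_mx (@complex.Im R) w *m C.
Proof.
apply/matrixP => i j; rewrite !mxE Im_sum; apply: eq_bigr => l _.
by rewrite !mxE ImMr.
Qed.
Lemma Re_scale n (l : R[i]) (w : 'rV[R[i]]_n) :
  map_mx (@complex.Re R) (l *: w) = complex.Re l *: map_mx (@complex.Re R) w - complex.Im l *: map_mx (@complex.Im R) w.
Proof. by apply/matrixP => i j; rewrite !mxE ReMl. Qed.
Lemma Im_scale n (l : R[i]) (w : 'rV[R[i]]_n) :
  map_mx (@complex.Im R) (l *: w) = complex.Re l *: map_mx (@complex.Im R) w + complex.Im l *: map_mx (@complex.Re R) w.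
Proof. by apply/matrixP => i j; rewrite !mxE ImMl. Qed.

Definition qf {n} (x : 'rV[R]_n) (P : 'M[R]_n) (y : 'rV[R]_n) : R := (x *m P *m y^T) 0 0.

Lemma qf_sym n (x : 'rV[R]_n) (P : 'M[R]_n) y : symmetric_mx P -> qf x P y = qf y P x.
Proof.
move=> sP; rewrite /qf [LHS](_ : _ = ((x *m P *m y^T)^T) 0 0); last by rewrite [RHS]mxE.
by rewrite !trmx_mul trmxK sP mulmxA.
Qed.

Arguments qf_sym {n} x P y.
Lemma qf_ge0 n (x : 'rV[R]_n) (P : 'M[R]_n) : posdef_mx P -> 0 <= qf x P x.
Proof.
case=> _ h; have [->|nz] := eqVneq x 0; last exact/ltW/h.
by rewrite /qf !mul0mx mxE.
Qed.


Lemma Re_mulc n (w : 'rV[R[i]]_n) (C : 'M[R]_n) :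
  map_mx (@complex.Re R) (w *m cmx C) = map_mx (@complex.Re R) w *m C.
Proof.
apply/matrixP => i j; rewrite !mxE Re_sum; apply: eq_bigr => l _.
by rewrite !mxE ReMr.
Qed.
Lemma Im_mulc n (w : 'rV[R[i]]_n) (C : 'M[R]_n) :
  map_mx (@complex.Im R) (w *m cmx C) = map_mx (@complex.Im R) w *m C.
Proof.
apply/matrixP => i j; rewrite !mxE Im_sum; apply: eq_bigr => l _.
by rewrite !mxE ImMr.
Qed.

Lemma cmxM n (A B : 'M[R]_n) : cmx (A *m B) = cmx A *m cmx B.
Proof. exact: (map_mxM (real_complex R) A B). Qed.
Lemma cmx1 n : cmx (1%:M : 'M[R]_n) = 1%:M.
Proof. exact: (map_mx1 (real_complex R)). Qed.

Lemma posdef_unit n (P : 'M[R]_n) : posdef_mx P -> P \in unitmx.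
Proof.
case=> _ h; rewrite unitmxE unitfE; apply/negP => /det0P [v vnz vP].
by have := h v vnz; rewrite vP mul0mx mxE ltxx.
Qed.

Arguments qf_ge0 {n} x {P}.
Lemma pos_pair n (P : 'M[R]_n) x y : posdef_mx P -> (x != 0) || (y != 0) ->
  0 < qf x P x + qf y P y.
Proof.
move=> pP; have [hx hy] := (qf_ge0 x pP, qf_ge0 y pP).
case/orP => nz.
  by apply: ltr_wpDr => //; case: pP => _ /(_ _ nz).
by apply: ltr_wpDl => //; case: pP => _ /(_ _ nz).
Qed.

Arguments pos_pair {n P} x y.
Arguments posdef_unit {n P}.
Lemma eig_pos n (A0 S B : 'M[R]_n) : posdef_mx A0 -> posdef_mx S -> A0 *m B = S ->
  forall lam, eigenvalue (cmx B) lam -> complex.Im lam = 0 /\ 0 < complex.Re lam.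
Proof.
move=> pA pS eAB lam /eigenvalueP [v vB vnz].
have uA := posdef_unit pA.
set w := v *m cmx (invmx A0).
have vw : v = w *m cmx A0 by rewrite /w -mulmxA -cmxM (mulVmx uA) cmx1 mulmx1.
have eqS : w *m cmx S = lam *: (w *m cmx A0).
  by rewrite -eAB cmxM mulmxA -vw vB vw.
clearbody w.
set x := map_mx (@complex.Re R) w; set y := map_mx (@complex.Im R) w.
have nz : (x != 0) || (y != 0).
  rewrite -negb_and; apply/negP => /andP [/eqP x0 /eqP y0]; move/negP: vnz; apply.
  rewrite vw (_ : w = 0) ?mul0mx //; apply/matrixP => i j.
  move/matrixP: x0 => /(_ i j); move/matrixP: y0 => /(_ i j).
  rewrite /x /y !mxE; case: (w i j) => a b /= -> ->; done.
have hx : x *m S = complex.Re lam *: (x *m A0) - complex.Im lam *: (y *m A0).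
  by rewrite /x /y -Re_mulc eqS Re_scale Re_mulc Im_mulc.
have hy : y *m S = complex.Re lam *: (y *m A0) + complex.Im lam *: (x *m A0).
  by rewrite /x /y -Im_mulc eqS Im_scale Re_mulc Im_mulc.
have q1 : forall z, qf x S z = complex.Re lam * qf x A0 z - complex.Im lam * qf y A0 z.
  by move=> z; rewrite /qf hx mulmxBl -!scalemxAl !mxE.
have q2 : forall z, qf y S z = complex.Re lam * qf y A0 z + complex.Im lam * qf x A0 z.
  by move=> z; rewrite /qf hy mulmxDl -!scalemxAl !mxE.
have sA : symmetric_mx A0 by case: pA.
have sS : symmetric_mx S by case: pS.
have := pos_pair _ _ pA nz; have := pos_pair _ _ pS nz.
have e1 := qf_sym x _ y sA; have e2 := qf_sym x _ y sS.
rewrite q2 q1 in e2; rewrite q1 q2.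
set a := qf x A0 x; set b := qf y A0 y; set c := qf x A0 y; set d := qf y A0 x.
rewrite -/c -/d in e1 e2 *.
move=> hs ha.
have hb : complex.Im lam * (a + b) = 0.
  have h : complex.Re lam * d + complex.Im lam * a - (complex.Re lam * c - complex.Im lam * b) = 0.
    by rewrite e2 subrr.
  rewrite e1 in h; rewrite -h; ring.
have b0 : complex.Im lam = 0.
  by move/eqP: hb; rewrite mulf_eq0 (gt_eqF ha) orbF => /eqP.
split=> //.
move: hs; rewrite b0 e1 !mul0r !subr0 addr0 -mulrDr.
by rewrite pmulr_lgt0.
Qed.

End Cplx.

Section T. Variable R : realType.

Lemma cmod_le_sum (rs : seq R[i]) z : z \in rs -> cmodulus z <= \sum_(w <- rs) cmodulus w.
Proof.
elim: rs => // w rs IH; rewrite inE big_cons => /orP [/eqP ->|zr].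
  by rewrite lerDl sumr_ge0 // => *; exact: sqrtr_ge0.
by apply: (le_trans (IH zr)); rewrite lerDr sqrtr_ge0.
Qed.

Lemma eig_le_sr n (F : 'M[R]_n) lam : eigenvalue (cmx F) lam -> cmodulus lam <= spectral_radius F.
Proof.
move=> ev; have [rs Hrs] := closed_field_poly_normal (char_poly (cmx F)).
have lc : lead_coef (char_poly (cmx F)) != 0.
  by rewrite (monicP (char_poly_monic _)) oner_eq0.
have inrs : forall z, eigenvalue (cmx F) z -> z \in rs.
  by move=> z; rewrite eigenvalue_root_char Hrs rootZ // root_prod_XsubC.
apply: ub_le_sup; last by exists lam.
exists (\sum_(w <- rs) cmodulus w) => r /= [z [ez ->]].
exact/cmod_le_sum/inrs.
Qed.

Lemma sr_unit n (F : 'M[R]_n) (a : R) : spectral_radius F < `|a| -> (a%:M - F) \in unitmx.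
Proof.
move=> hsr; rewrite unitmxE unitfE; apply/negP => /det0P [v vnz vF].
have vF' : v *m F = a *: v.
  by apply/eqP; rewrite eq_sym -subr_eq0 -mul_mx_scalar -mulmxBr vF.
have ev : eigenvalue (cmx F) (real_complex R a).
  apply/eigenvalueP; exists (map_mx (real_complex R) v).
    by rewrite -(map_mxM (real_complex R) v F) vF' map_mxZ.
  by rewrite map_mx_eq0.
have := @eig_le_sr n F _ ev; rewrite /cmodulus /= expr0n /= addr0 sqrtr_sqr.
by rewrite leNgt hsr.
Qed.
End T.

Section J. Variable R : realType. Variable n : nat.
Implicit Types (f g : 'rV[R]_n -> 'rV[R]_n) (x : 'rV[R]_n).

Lemma JacD f g x : differentiable f x -> differentiable g x -> Jac (f + g) x = Jac f x + Jac g x.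
Proof.
move=> df dg; have H := diffD df dg; rewrite /Jac /jacobian; apply/matrixP => i j.
rewrite mxE mxE mxE [X in _ = X + _]mxE [X in _ = _ + X]mxE.
rewrite [X in _ = X + _]mxE [X in _ = _ + X]mxE.
have H2 := congr1 (fun h : 'rV[R]_n -> 'rV[R]_n => h 'e_j 0 i) H.
apply: etrans H2 _.
by rewrite /= [LHS]mxE.
Qed.

Lemma JacZ f (c : R) x : differentiable f x -> Jac (c *: f) x = c *: Jac f x.
Proof.
move=> df; have H := diffZ c df; rewrite /Jac /jacobian; apply/matrixP => i j.
rewrite mxE mxE mxE [X in _ = _ * X]mxE [X in _ = _ * X]mxE.
have H2 := congr1 (fun h : 'rV[R]_n -> 'rV[R]_n => h 'e_j 0 i) H.
apply: etrans H2 _.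
by rewrite /= [LHS]mxE.
Qed.

Lemma Jac_sum k (F : 'I_k -> 'rV[R]_n -> 'rV[R]_n) x : (forall i, differentiable (F i) x) ->
  Jac (\sum_(i < k) F i) x = \sum_(i < k) Jac (F i) x.
Proof.
move=> dF; elim: k F dF => [|k IH] F dF.
  rewrite !big_ord0; have H := @diff_cst R _ ('rV[R]_n) 0 x.
  rewrite /Jac /jacobian; apply/matrixP => i j.
  rewrite mxE mxE [RHS]mxE.
  have H2 := congr1 (fun h : 'rV[R]_n -> 'rV[R]_n => h 'e_j 0 i) H.
  apply: etrans H2 _.
  by rewrite /= [LHS]mxE.
rewrite !big_ord_recr /= JacD ?IH //.
exact: differentiable_sum.
Qed.

Lemma Jac_id x : Jac id x = 1%:M.
Proof.
have H : 'd id x = id :> ('rV[R]_n -> 'rV[R]_n) by rewrite diff_val.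
rewrite /Jac /jacobian; apply/matrixP => i j.
rewrite mxE mxE [RHS]mxE.
have H2 := congr1 (fun h : 'rV[R]_n -> 'rV[R]_n => h 'e_j 0 i) H.
apply: etrans H2 _.
by rewrite /= mxE eqxx /= eq_sym.
Qed.
End J.

Section P. Variable R : realType.

Lemma trmx_sumI n k (F : 'I_k -> 'M[R]_n) : (\sum_(i < k) F i)^T = \sum_(i < k) (F i)^T.
Proof. by apply/matrixP => i j; rewrite !(mxE, summxE); apply: eq_bigr => l _; rewrite mxE. Qed.

Lemma posdef_sum n k (F : 'I_k -> 'M[R]_n) : (0 < k)%N -> (forall i, posdef_mx (F i)) ->
  posdef_mx (\sum_(i < k) F i).
Proof.
case: k F => // k F _ pF; split.
  by rewrite /symmetric_mx trmx_sumI; apply: eq_bigr => i _; case: (pF i).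
move=> v vnz; rewrite mulmx_sumr mulmx_suml summxE big_ord_recl.
apply: ltr_wpDr; last by case: (pF ord0) => _ /(_ v vnz).
by apply: sumr_ge0 => i _; case: (pF (lift ord0 i)) => _ /(_ v vnz) /ltW.
Qed.

Lemma posdef_congr n (N Q : 'M[R]_n) : N \in unitmx -> posdef_mx Q -> posdef_mx (N^T *m Q *m N).
Proof.
move=> uN [sQ pQ]; split.
  by rewrite /symmetric_mx !trmx_mul trmxK sQ mulmxA.
move=> v vnz.
have -> : v *m (N^T *m Q *m N) *m v^T = (v *m N^T) *m Q *m (v *m N^T)^T.
  by rewrite trmx_mul trmxK !mulmxA.
apply: pQ; apply/negP => /eqP h; move/negP: vnz; apply.
have uNt : N^T \in unitmx by rewrite unitmx_tr.
by rewrite -(mulmxK uNt v) h mul0mx.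
Qed.

Lemma expand_term n (a : R) (F P : 'M[R]_n) :
  (a%:M - F) *m P *m (a%:M - F) = a ^+ 2 *: P - a *: (F *m P) - a *: (P *m F) + F *m P *m F.
Proof.
rewrite !(mulmxBl, mulmxBr) !(mul_scalar_mx, mul_mx_scalar).

by rewrite -scalemxAl scalerA -expr2 opprB addrA addrAC.
Qed.

Lemma sum_terms n k (a : 'I_k -> R) (P : 'I_k -> 'M[R]_n) (F : 'M[R]_n) :
  \sum_(i < k) P i = 1%:M -> \sum_(i < k) a i *: P i = F ->
  \sum_(i < k) ((a i)%:M - F) *m P i *m ((a i)%:M - F) = \sum_(i < k) (a i ^+ 2) *: P i - F *m F.
Proof.
move=> sP hF.
have h1 : \sum_(i < k) a i *: (F *m P i) = F *m F.
  by rewrite -[X in F *m X]hF mulmx_sumr; apply: eq_bigr => i _; rewrite scalemxAr.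
have h2 : \sum_(i < k) a i *: (P i *m F) = F *m F.
  by rewrite -[X in X *m F]hF mulmx_suml; apply: eq_bigr => i _; rewrite scalemxAl.
have h3 : \sum_(i < k) F *m P i *m F = F *m F.
  by rewrite -mulmx_suml -mulmx_sumr sP mulmx1.
under eq_bigr do rewrite expand_term.
by rewrite big_split /= !sumrB h1 h2 h3 subrK.
Qed.
End P.

Theorem corollary1 (R : realType) (p k : nat) (hp : (0 < p)%N) (hk : (0 < k)%N)
  (a : 'I_k -> R) (f : 'rV[R]_p -> 'rV[R]_p) (M : 'I_k -> 'rV[R]_p -> 'rV[R]_p)
  (m2 : 'rV[R]_p -> 'rV[R]_p) (u : 'rV[R]_p) (eta : 'rV[R]_p -> R) (A0 : 'M[R]_p) :
  (forall x, differentiable f x) ->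
  (forall i x, differentiable (M i) x) ->
  (forall x, \sum_(i < k) M i x = x) ->
  (forall x, \sum_(i < k) a i *: M i x = f x) ->
  (forall x, m2 x = \sum_(i < k) (a i ^+ 2) *: M i x) ->
  (* eta : twice differentiable strictly convex entropy with Hessian A0 at u *)
  (forall x, differentiable eta x) ->
  (forall j, differentiable ('D_(ebasis j) eta) u) ->
  strictly_convex eta ->
  A0 = hessian eta u ->
  symmetric_mx (A0 *m Jac f u) ->
  (forall i, posdef_mx (A0 *m Jac (M i) u)) ->
  (forall i, spectral_radius (Jac f u) < `|a i|) ->
  let B := Jac m2 u - Jac f u *m Jac f u in
  (forall lam : R[i], eigenvalue (cmx B) lam -> complex.Im lam = 0 /\ 0 < complex.Re lam)
  /\ B \in unitmx.
Proof.
move=> df dM Hsum Hf Hm2 deta ddeta sconv HA0 sAF pAP hsr B.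
set F := Jac f u.
have sumP : \sum_(i < k) Jac (M i) u = 1%:M.
  have E : \sum_(i < k) M i = id by apply/funext => x; rewrite fct_sumE Hsum.
  by rewrite -(@Jac_id R p u) -E Jac_sum // => i; apply: dM.
have hF : \sum_(i < k) a i *: Jac (M i) u = F.
  have E : f = \sum_(i < k) (a i *: M i) by apply/funext => x; rewrite fct_sumE -Hf.
  rewrite /F E Jac_sum; last by move=> i; apply: differentiableZ; apply: dM.
  by apply: eq_bigr => i _; rewrite JacZ //; apply: dM.
have hm2 : Jac m2 u = \sum_(i < k) (a i ^+ 2) *: Jac (M i) u.
  have E : m2 = \sum_(i < k) ((a i ^+ 2) *: M i) by apply/funext => x; rewrite fct_sumE Hm2.
  rewrite E Jac_sum; last by move=> i; apply: differentiableZ; apply: dM.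
  by apply: eq_bigr => i _; rewrite JacZ //; apply: dM.
have sA : symmetric_mx A0.
  rewrite /symmetric_mx -[A0]mulmx1 -sumP mulmx_sumr trmx_sumI.
  by apply: eq_bigr => i _; case: (pAP i).
have pA : posdef_mx A0.
  have -> : A0 = \sum_(i < k) A0 *m Jac (M i) u by rewrite -mulmx_sumr sumP mulmx1.
  exact: posdef_sum.
have FA : F^T *m A0 = A0 *m F.
  by move: sAF; rewrite /symmetric_mx trmx_mul sA.
have key : forall i, ((a i)%:M - F)^T *m (A0 *m Jac (M i) u) *m ((a i)%:M - F)
    = A0 *m (((a i)%:M - F) *m Jac (M i) u *m ((a i)%:M - F)).
  move=> i; rewrite !mulmxA; congr (_ *m _ *m _).
  by rewrite linearB /= tr_scalar_mx mulmxBl mulmxBr mul_scalar_mx mul_mx_scalar FA.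
have eS : A0 *m B = \sum_(i < k) ((a i)%:M - F)^T *m (A0 *m Jac (M i) u) *m ((a i)%:M - F).
  under eq_bigr do rewrite key.
  by rewrite -mulmx_sumr sum_terms // /B hm2.
have uN : forall i, (a i)%:M - F \in unitmx by move=> i; apply: sr_unit.
have pS : posdef_mx (A0 *m B).
  by rewrite eS; apply: posdef_sum => // i; apply: posdef_congr => //; apply: pAP.
split.
  by move=> lam; apply: (@eig_pos R p A0 (A0 *m B) B pA pS erefl lam).
by have := @posdef_unit R p _ pS; rewrite unitmx_mul => /andP [].
Qed.
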